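(* Let $\alpha\in\mathbb{N}_0$ and $M\ge0$. (a) For all $y\in C^{(2\alpha+4)}(0,\infty)$ and $x>0$, $$x^2(x^{-1}D_x)^{2\alpha+4}\big[x^{2\alpha+2}y(x)\big]=\Big[D_x^2+\frac{2\alpha+1}{x}D_x-\frac{4\alpha+4}{x^2}\Big]^{\alpha+2}y(x).$$ (b) For every $\lambda\ge0$ the Bessel-type function $J_\lambda^{\alpha,M}$ satisfies, for $x>0$, $$\Big\{\big[\widetilde L_{2,x}^{\alpha}+\lambda^2\big]+\frac{M}{2^{2\alpha+2}(\alpha+2)!}\big[\widetilde L_{2\alpha+4,x}^{\alpha}+\lambda^{2\alpha+4}\big]\Big\}J_\lambda^{\alpha,M}(x)=0.$$ (c) For every $\lambda\ge0$, $\big[\widetilde L_{2\alpha+4,x}^{\alpha}+\lambda^{2\alpha+4}\big]K_\lambda^{\alpha}(x)=0$ for $x>0$.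
   Context: $\widetilde L_{2,x}^{\alpha}y(x)=x^{-2\alpha-1}D_x[x^{2\alpha+1}D_xy(x)]=y''+\frac{2\alpha+1}{x}y'$ and $\widetilde L_{2\alpha+4,x}^{\alpha}y(x)=(-1)^{\alpha+1}x^2(x^{-1}D_x)^{2\alpha+4}[x^{2\alpha+2}y(x)]$, where $(x^{-1}D_x)^k$ is the $k$-fold application of $y\mapsto x^{-1}y'$. For $\gamma>-1$, $\lambda\ge0$: $J_\lambda^{\gamma}(x)={}_0F_1(-;\gamma+1;-\tfrac14(\lambda x)^2)=2^{\gamma}\Gamma(\gamma+1)(\lambda x)^{-\gamma}J_\gamma(\lambda x)$ (normalized Bessel function). The Bessel-type functions are $J_\lambda^{\alpha,M}(x)=J_\lambda^{\alpha}(x)+M K_\lambda^{\alpha}(x)$ with $K_\lambda^{\alpha}(x)=-k_\lambda^{\alpha}x^2J_\lambda^{\alpha+2}(x)$, $k_\lambda^{\alpha}=\frac{(\lambda/2)^{2\alpha+4}}{(\alpha+1)(\alpha+2)!}$. *)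

(* Defs.v *)
From Stdlib Require Import Reals Lra ClassicalEpsilon Factorial.
Open Scope R_scope.

Definition D (f : R -> R) : R -> R :=
  fun x => epsilon (inhabits 0) (fun l => derivable_pt_lim f x l).

Definition Rlim (u : nat -> R) : R :=
  epsilon (inhabits 0) (fun l => Un_cv u l).

Definition iterop (k : nat) (T : (R -> R) -> (R -> R)) (f : R -> R) : R -> R :=
  Nat.iter k T f.

Definition Dk (k : nat) (f : R -> R) : R -> R := iterop k D f.

Definition Cn_pos (n : nat) (y : R -> R) : Prop :=
  (forall k x, (k < n)%nat -> 0 < x -> derivable_pt_lim (Dk k y) x (Dk (S k) y x)) /\
  (forall x, 0 < x -> continuity_pt (Dk n y) x).

Definition xinvD (f : R -> R) : R -> R := fun x => / x * D f x.

Fixpoint poch (a : R) (k : nat) : R :=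
  match k with O => 1 | S k' => poch a k' * (a + INR k') end.

(* Normalized Bessel function J_lambda^gamma(x) = 0F1(-; gamma+1; -(lambda x)^2/4) *)
Definition Jn (gamma lambda x : R) : R :=
  Rlim (fun N => sum_f_R0 (fun k =>
      (-1) ^ k * (lambda * x / 2) ^ (2 * k) / (INR (fact k) * poch (gamma + 1) k)) N).

Definition kcoef (alpha : nat) (lambda : R) : R :=
  (lambda / 2) ^ (2 * alpha + 4) / ((INR alpha + 1) * INR (fact (alpha + 2))).

Definition Kfun (alpha : nat) (lambda x : R) : R :=
  - kcoef alpha lambda * x ^ 2 * Jn (INR alpha + 2) lambda x.

Definition JM (alpha : nat) (M lambda x : R) : R :=
  Jn (INR alpha) lambda x + M * Kfun alpha lambda x.

Definition L2 (alpha : nat) (y : R -> R) : R -> R :=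
  fun x => / x ^ (2 * alpha + 1) * D (fun t => t ^ (2 * alpha + 1) * D y t) x.

Definition L2a4 (alpha : nat) (y : R -> R) : R -> R :=
  fun x => (-1) ^ (alpha + 1) * x ^ 2 *
           iterop (2 * alpha + 4) xinvD (fun t => t ^ (2 * alpha + 2) * y t) x.

Definition Bop (alpha : nat) (f : R -> R) : R -> R :=
  fun x => D (D f) x + (2 * INR alpha + 1) / x * D f x - (4 * INR alpha + 4) / x ^ 2 * f x.

(* Main.v *)
From Stdlib Require Import Reals Lra Lia Factorial ClassicalEpsilon FunctionalExtensionality PropExtensionality Permutation List.
From Coquelicot Require Import Coquelicot.
Require Import Defs.
Open Scope R_scope.

Definition eqp (f g : R -> R) : Prop := forall x, 0 < x -> f x = g x.

Lemma D_unique f x l : derivable_pt_lim f x l -> D f x = l.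
Proof.
  intros H. unfold D.
  pose proof (epsilon_spec (inhabits 0) (fun l => derivable_pt_lim f x l) (ex_intro _ l H)) as H1.
  exact (uniqueness_limite f x _ _ H1 H).
Qed.

Lemma loc_pos x f g : 0 < x -> eqp f g -> locally x (fun t => f t = g t).
Proof.
  intros Hx H. exists (mkposreal x Hx). intros t Ht. apply H.
  unfold ball in Ht; simpl in Ht; unfold AbsRing_ball, abs, minus, plus, opp in Ht; simpl in Ht.
  apply Rabs_def2 in Ht. lra.
Qed.

Lemma deriv_ext f g x l : 0 < x -> eqp f g -> derivable_pt_lim f x l -> derivable_pt_lim g x l.
Proof.
  intros Hx H Hd. apply is_derive_Reals. apply is_derive_Reals in Hd.
  eapply is_derive_ext_loc; [apply loc_pos; eauto|exact Hd].
Qed.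

Lemma D_local f g x : 0 < x -> eqp f g -> D f x = D g x.
Proof.
  intros Hx H. unfold D. f_equal. apply functional_extensionality; intro l.
  apply propositional_extensionality; split; intro Hd.
  - eapply deriv_ext; eauto.
  - eapply deriv_ext; eauto. intros t Ht; symmetry; auto.
Qed.

Lemma D_eqp f g : eqp f g -> eqp (D f) (D g).
Proof. intros H x Hx. apply D_local; auto. Qed.

Lemma eqp_refl f : eqp f f. Proof. intros x _; reflexivity. Qed.
Lemma eqp_sym f g : eqp f g -> eqp g f. Proof. intros H x Hx; symmetry; auto. Qed.
Lemma eqp_trans f g h : eqp f g -> eqp g h -> eqp f h.
Proof. intros H1 H2 x Hx; rewrite H1; auto. Qed.

Fixpoint Sm (n : nat) (f : R -> R) : Prop :=
  match n with
  | O => True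
  | S n => (forall x, 0 < x -> derivable_pt_lim f x (D f x)) /\ Sm n (D f)
  end.

Lemma Sm_ext n : forall f g, eqp f g -> Sm n f -> Sm n g.
Proof.
  induction n; simpl; auto. intros f g H [H1 H2]. split.
  - intros x Hx. rewrite <- (D_local f g x Hx H). eapply deriv_ext; eauto.
  - eapply IHn; [apply D_eqp; exact H|exact H2].
Qed.

Lemma Sm_S n : forall f, Sm (S n) f -> Sm n f.
Proof.
  induction n; intros f H; simpl in *; auto. destruct H as [H1 H2]. split; auto.
Qed.

Lemma Sm_le m n f : (m <= n)%nat -> Sm n f -> Sm m f.
Proof.
  induction 1; auto. intros H1. apply IHle. apply Sm_S; auto.
Qed.

Lemma Cn_Sm n : forall y, (forall k x, (k < n)%nat -> 0 < x -> derivable_pt_lim (Dk k y) x (Dk (S k) y x)) -> Sm n y.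
Proof.
  induction n; simpl; auto. intros y H. split.
  - intros x Hx. exact (H 0%nat x ltac:(lia) Hx).
  - apply IHn. intros k x Hk Hx.
    assert (E : forall j, Dk j (D y) = Dk (S j) y).
    { intro j. unfold Dk, iterop. rewrite <- Nat.iter_succ_r. reflexivity. }
    rewrite !E. apply H; auto; lia.
Qed.

Lemma dl_plus f g x lf lg : derivable_pt_lim f x lf -> derivable_pt_lim g x lg ->
  derivable_pt_lim (fun t => f t + g t) x (lf + lg).
Proof. intros; apply (derivable_pt_lim_plus f g); auto. Qed.
Lemma dl_mult f g x lf lg : derivable_pt_lim f x lf -> derivable_pt_lim g x lg ->
  derivable_pt_lim (fun t => f t * g t) x (lf * g x + f x * lg).
Proof. intros; apply (derivable_pt_lim_mult f g); auto. Qed.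
Lemma dl_const c x : derivable_pt_lim (fun _ => c) x 0.
Proof. apply (derivable_pt_lim_const c). Qed.
Lemma dl_id x : derivable_pt_lim (fun t => t) x 1.
Proof. apply derivable_pt_lim_id. Qed.

Lemma Sm_plus n : forall f g, Sm n f -> Sm n g -> Sm n (fun x => f x + g x).
Proof.
  induction n; simpl; auto. intros f g [F1 F2] [G1 G2].
  assert (E : eqp (fun x => D f x + D g x) (D (fun x => f x + g x))).
  { intros x Hx. symmetry. apply D_unique. apply dl_plus; auto. }
  split.
  - intros x Hx. rewrite <- E by auto. apply dl_plus; auto.
  - eapply Sm_ext; [exact E|]. apply IHn; auto.
Qed.

Lemma Sm_mult n : forall f g, Sm n f -> Sm n g -> Sm n (fun x => f x * g x).
Proof.
  induction n; simpl; auto. intros f g [F1 F2] [G1 G2].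
  assert (E : eqp (fun x => D f x * g x + f x * D g x) (D (fun x => f x * g x))).
  { intros x Hx. symmetry. apply D_unique. apply dl_mult; auto. }
  split.
  - intros x Hx. rewrite <- E by auto. apply dl_mult; auto.
  - eapply Sm_ext; [exact E|]. apply Sm_plus; apply IHn; auto.
    + apply Sm_S; simpl; auto.
    + apply Sm_S; simpl; auto.
Qed.

Lemma Sm_const n c : Sm n (fun _ => c).
Proof.
  revert c; induction n; simpl; auto. intro c.
  assert (E : D (fun _ => c) = fun _ => 0).
  { apply functional_extensionality; intro x. apply D_unique, dl_const. }
  rewrite E. split; auto. intros; apply dl_const.
Qed.

Lemma Sm_id n : Sm n (fun x => x).
Proof.
  destruct n; simpl; auto.
  assert (E : D (fun x => x) = fun _ => 1).
  { apply functional_extensionality; intro x. apply D_unique, dl_id. }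
  rewrite E. split; [intros; apply dl_id|apply Sm_const].
Qed.

Definition pw (a : R) : R -> R := fun x => Rpower x a.

Lemma Sm_pw n : forall a, Sm n (pw a).
Proof.
  induction n; simpl; auto. intro a.
  assert (E : eqp (fun x => a * pw (a - 1) x) (D (pw a))).
  { intros x Hx. symmetry. apply D_unique. apply derivable_pt_lim_power; auto. }
  split.
  - intros x Hx. rewrite <- E by auto. apply derivable_pt_lim_power; auto.
  - eapply Sm_ext; [exact E|]. apply Sm_mult; [apply Sm_const|apply IHn].
Qed.

Definition Th (a : R) (f : R -> R) : R -> R := fun x => x * D f x + a * f x.

Lemma Th_eqp a f g : eqp f g -> eqp (Th a f) (Th a g).
Proof. intros H x Hx. unfold Th. rewrite (D_local f g x Hx H), H; auto. Qed.

Lemma Sm_Th n a f : Sm (S n) f -> Sm n (Th a f).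
Proof.
  intros H. unfold Th. apply Sm_plus.
  - apply Sm_mult; [apply Sm_id|]. destruct H; auto.
  - apply Sm_mult; [apply Sm_const|]. apply Sm_S; auto.
Qed.

Lemma pw_pos a x : 0 < x -> 0 < pw a x.
Proof. intros; unfold pw, Rpower; apply exp_pos. Qed.

Lemma pw_add a b x : pw (a + b) x = pw a x * pw b x.
Proof. unfold pw; apply Rpower_plus. Qed.

Lemma pw_1 x : 0 < x -> pw 1 x = x.
Proof. unfold pw; apply Rpower_1. Qed.

Lemma pw_m2 x : 0 < x -> pw (-2) x = / (x * x).
Proof.
  intros Hx. unfold pw. replace (-2) with (- (2)) by ring. rewrite Rpower_Ropp.
  replace 2 with (INR 2) by (simpl; lra). rewrite Rpower_pow by auto. simpl; f_equal; ring.
Qed.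

Lemma Th_pw a k g : Sm 1 g ->
  eqp (Th a (fun x => pw k x * g x)) (fun x => pw k x * Th (a + k) g x).
Proof.
  intros [Hg _] x Hx. unfold Th.
  rewrite (D_unique (fun x => pw k x * g x) x (k * pw (k-1) x * g x + pw k x * D g x)).
  2:{ apply dl_mult; auto. apply derivable_pt_lim_power; auto. }
  replace (pw k x) with (pw (k - 1) x * x).
  2:{ rewrite <- (pw_1 x Hx) at 2. rewrite <- pw_add. f_equal; ring. }
  ring.
Qed.

Lemma DTh b f x : 0 < x -> Sm 2 f ->
  D (Th b f) x = D f x + x * D (D f) x + b * D f x.
Proof.
  intros Hx [H1 [H2 _]]. apply D_unique. unfold Th.
  replace (D f x + x * D (D f) x + b * D f x) with
    ((1 * D f x + x * D (D f) x) + b * D f x) by ring.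
  apply dl_plus.
  - apply dl_mult; [apply dl_id|auto].
  - replace (b * D f x) with (0 * f x + b * D f x) by ring.
    apply dl_mult; [apply dl_const|auto].
Qed.

Lemma Th_comm a b f : Sm 2 f -> eqp (Th a (Th b f)) (Th b (Th a f)).
Proof.
  intros H x Hx. assert (E1 := DTh b f x Hx H). assert (E2 := DTh a f x Hx H).
  unfold Th in *. rewrite E1, E2. ring.
Qed.

Lemma xinvD_Th f : eqp (xinvD f) (fun x => pw (-2) x * Th 0 f x).
Proof.
  intros x Hx. unfold xinvD, Th. rewrite pw_m2 by auto. field. lra.
Qed.

Lemma Bop_Th al f : Sm 2 f ->
  eqp (Bop al f) (fun x => pw (-2) x * Th (-2) (Th (2 * INR al + 2) f) x).
Proof.
  intros H x Hx. assert (E1 := DTh (2 * INR al + 2) f x Hx H). unfold Bop.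
  rewrite pw_m2 by auto. unfold Th in *. rewrite E1. field. lra.
Qed.

Lemma xinvD_eqp f g : eqp f g -> eqp (xinvD f) (xinvD g).
Proof. intros H x Hx. unfold xinvD. rewrite (D_local f g x Hx H); auto. Qed.

Lemma Bop_eqp al f g : eqp f g -> eqp (Bop al f) (Bop al g).
Proof.
  intros H x Hx. unfold Bop.
  rewrite (D_local f g x Hx H), (D_local (D f) (D g) x Hx (D_eqp f g H)), H; auto.
Qed.

Lemma iter_eqp T n f g : (forall f g, eqp f g -> eqp (T f) (T g)) -> eqp f g ->
  eqp (iterop n T f) (iterop n T g).
Proof.
  intros HT H. induction n; simpl; auto.
Qed.

Fixpoint ThL (l : list R) (g : R -> R) : R -> R :=
  match l with nil => g | a :: l => Th a (ThL l g) end.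

Lemma Sm_ThL l : forall n g, Sm (n + length l) g -> Sm n (ThL l g).
Proof.
  induction l; simpl; intros n g H.
  - rewrite Nat.add_0_r in H; auto.
  - apply Sm_Th. apply IHl. replace (S n + length l)%nat with (n + S (length l))%nat by lia. auto.
Qed.

Lemma ThL_perm l l' : Permutation l l' -> forall g, Sm (length l) g -> eqp (ThL l g) (ThL l' g).
Proof.
  induction 1; intros g Hg; simpl in *.
  - apply eqp_refl.
  - apply Th_eqp. apply IHPermutation. apply Sm_S; auto.
  - apply Th_comm. apply (Sm_ThL l 2). auto.
  - eapply eqp_trans; [apply IHPermutation1; auto|]. apply IHPermutation2.
    rewrite <- (Permutation_length H); auto.
Qed.

Fixpoint listA (k : R) (n : nat) : list R :=
  match n with O => nil | S n => (k - 2 * INR n) :: listA k n end.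

Lemma listA_len k n : length (listA k n) = n.
Proof. induction n; simpl; auto. Qed.

Lemma iter_u n : forall k g, Sm n g ->
  eqp (iterop n xinvD (fun x => pw k x * g x))
      (fun x => pw (k - 2 * INR n) x * ThL (listA k n) g x).
Proof.
  induction n; intros k g Hg.
  - intros x Hx. simpl. f_equal. f_equal. ring.
  - change (iterop (S n) xinvD (fun x => pw k x * g x)) with
      (xinvD (iterop n xinvD (fun x => pw k x * g x))).
    eapply eqp_trans; [apply xinvD_eqp, IHn, Sm_S; auto|].
    eapply eqp_trans; [apply xinvD_Th|].
    intros x Hx. rewrite (Th_pw 0 (k - 2 * INR n) (ThL (listA k n) g)); auto.
    2:{ apply (Sm_ThL _ 1). rewrite listA_len. auto. }
    simpl ThL. rewrite Rplus_0_l. rewrite <- Rmult_assoc, <- pw_add.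
    f_equal. f_equal. rewrite S_INR. ring.
Qed.

Fixpoint listB (al : nat) (m : nat) : list R :=
  match m with O => nil
  | S m => (- 2 * INR m - 2) :: (2 * INR al + 2 - 2 * INR m) :: listB al m end.

Lemma listB_len al m : length (listB al m) = (2 * m)%nat.
Proof. induction m; simpl; auto. rewrite IHm. lia. Qed.

Lemma iter_Bop al m : forall y, Sm (2 * m) y ->
  eqp (iterop m (Bop al) y) (fun x => pw (- 2 * INR m) x * ThL (listB al m) y x).
Proof.
  induction m; intros y Hy.
  - intros x Hx. simpl. replace (-2 * 0) with 0 by ring. unfold pw. rewrite Rpower_O; auto. ring.
  - change (iterop (S m) (Bop al) y) with (Bop al (iterop m (Bop al) y)).
    assert (Hh : Sm 2 (ThL (listB al m) y)).
    { apply (Sm_ThL _ 2). rewrite listB_len. eapply Sm_le; [|exact Hy]. lia. }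
    eapply eqp_trans; [apply Bop_eqp, IHm; eapply Sm_le; [|exact Hy]; lia|].
    eapply eqp_trans; [apply Bop_Th; apply Sm_mult; [apply Sm_pw|exact Hh]|].
    intros x Hx.
    rewrite (Th_eqp (-2) _ _ (Th_pw _ _ _ (Sm_S _ _ Hh)) x Hx).
    rewrite (Th_pw (-2) (-2 * INR m) (Th (2 * INR al + 2 + -2 * INR m) (ThL (listB al m) y))); auto.
    2:{ apply (Sm_Th 1). auto. }
    simpl ThL. rewrite <- Rmult_assoc, <- pw_add. rewrite S_INR.
    replace (-2 + -2 * INR m) with (- 2 * INR m - 2) by ring.
    replace (2 * INR al + 2 + -2 * INR m) with (2 * INR al + 2 - 2 * INR m) by ring.
    f_equal. f_equal. ring.
Qed.

Fixpoint rseq (n : nat) : list nat := match n with O => nil | S n => n :: rseq n end.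
Fixpoint bseq (al m : nat) : list nat :=
  match m with O => nil | S m => (al + 2 + m)%nat :: m :: bseq al m end.

Lemma rseq_perm n : Permutation (rseq n) (seq 0 n).
Proof.
  induction n; [simpl; auto|]. cbn [rseq]. rewrite seq_S. simpl.
  eapply perm_trans; [apply perm_skip, IHn|]. apply Permutation_cons_append.
Qed.

Lemma bseq_perm al m : Permutation (bseq al m) (seq 0 m ++ seq (al + 2) m).
Proof.
  induction m; [simpl; auto|]. cbn [bseq]. rewrite !seq_S.
  rewrite <- !app_assoc. simpl.
  replace (seq 0 m ++ m :: seq (al + 2) m ++ (al + 2 + m)%nat :: nil)
    with ((seq 0 m ++ m :: seq (al + 2) m) ++ (al + 2 + m)%nat :: nil) by (rewrite <- app_assoc; reflexivity).
  apply Permutation_cons_app. rewrite app_nil_r.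
  apply Permutation_cons_app. auto.
Qed.

Lemma listA_map k n : listA k n = map (fun j => k - 2 * INR j) (rseq n).
Proof. induction n; simpl; auto. rewrite IHn; auto. Qed.

Lemma listB_map al m : listB al m = map (fun j => 2 * INR al + 2 - 2 * INR j) (bseq al m).
Proof.
  induction m; simpl; auto. rewrite IHm. f_equal.
  rewrite !plus_INR. simpl. ring.
Qed.

Lemma perm_AB al : Permutation (listA (2 * INR al + 2) (2 * al + 4)) (listB al (al + 2)).
Proof.
  rewrite listA_map, listB_map. apply Permutation_map.
  eapply perm_trans; [apply rseq_perm|].
  eapply perm_trans; [|apply Permutation_sym, bseq_perm].
  replace (2 * al + 4)%nat with ((al + 2) + (al + 2))%nat by lia.
  rewrite seq_app. simpl. apply Permutation_refl.
Qed.

Theorem part_a al : forall (y : R -> R), Cn_pos (2 * al + 4) y ->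
     forall x, 0 < x ->
       x ^ 2 * iterop (2 * al + 4) xinvD (fun t => t ^ (2 * al + 2) * y t) x
       = iterop (al + 2) (Bop al) y x.
Proof.
  intros y [Hc _] x Hx.
  assert (Hy : Sm (2 * al + 4) y) by (apply Cn_Sm; auto).
  assert (E1 : eqp (fun t => t ^ (2 * al + 2) * y t) (fun t => pw (2 * INR al + 2) t * y t)).
  { intros t Ht. unfold pw. replace (2 * INR al + 2) with (INR (2 * al + 2)).
    2:{ rewrite plus_INR, mult_INR. simpl. ring. }
    rewrite Rpower_pow; auto. }
  rewrite (iter_eqp xinvD (2 * al + 4) _ _ xinvD_eqp E1 x Hx).
  rewrite (iter_u (2 * al + 4) (2 * INR al + 2) y Hy x Hx).
  replace (2 * al + 4)%nat with (2 * (al + 2))%nat in Hy by lia.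
  rewrite (iter_Bop al (al + 2) y Hy x Hx).
  assert (Hl : Sm (length (listA (2 * INR al + 2) (2 * al + 4))) y).
  { rewrite listA_len. replace (2 * al + 4)%nat with (2 * (al + 2))%nat by lia; auto. }
  rewrite (ThL_perm _ _ (perm_AB al) y Hl x Hx).
  rewrite <- Rmult_assoc. f_equal.
  replace (x ^ 2) with (pw 2 x).
  2:{ unfold pw. replace 2 with (INR 2) by (simpl; lra). rewrite Rpower_pow; auto. }
  rewrite <- pw_add. f_equal. rewrite !plus_INR, !mult_INR. simpl. ring.
Qed.

Definition E (a : nat -> R) (x : R) : R := PSeries a (x ^ 2).
Definition ent (a : nat -> R) : Prop := CV_radius a = p_infty.

Lemma ent_ex a x : ent a -> ex_pseries a x.
Proof. intros H. apply CV_radius_inside. rewrite H. simpl. auto. Qed.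

Lemma ent_dom a b : (forall n, Rabs (a n) <= Rabs (b n)) -> ent b -> ent a.
Proof.
  unfold ent; intros H Hb.
  destruct (CV_radius_bounded a) as [Ua _]. destruct (CV_radius_bounded b) as [_ Lb].
  assert (H0 : Rbar_le (CV_radius b) (CV_radius a)).
  { apply Lb. intros r [M HM]. apply Ua. exists M. intros n. eapply Rle_trans; [|apply HM].
    rewrite !Rabs_mult. apply Rmult_le_compat_r; [apply Rabs_pos|apply H]. }
  rewrite Hb in H0. destruct (CV_radius a); simpl in H0; tauto.
Qed.

Lemma ent_exp K : 0 < K -> ent (fun n => K ^ n / INR (fact n)).
Proof.
  intros HK. apply CV_radius_infinite_DAlembert.
  - intro n. apply Rmult_integral_contrapositive; split.
    + apply pow_nonzero; lra.
    + apply Rinv_neq_0_compat, INR_fact_neq_0.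
  - apply is_lim_seq_ext with (u := fun n => K * / INR (S n)).
    + intro n. rewrite fact_simpl, mult_INR. simpl pow.
      assert (H1 := INR_fact_neq_0 n). assert (H2 : INR (S n) <> 0) by (apply not_0_INR; lia).
      assert (H3 : K ^ n <> 0) by (apply pow_nonzero; lra).
      rewrite Rabs_pos_eq.
      * field. auto.
      * field_simplify; auto. apply Rlt_le, Rdiv_lt_0_compat; auto. rewrite S_INR. pose proof (pos_INR n). lra.
    + replace (Finite 0) with (Rbar_mult K (Rbar_inv p_infty)) by (simpl; f_equal; ring).
      apply is_lim_seq_scal_l. apply is_lim_seq_inv; [|discriminate].
      apply (is_lim_seq_incr_1 INR). apply is_lim_seq_INR.
Qed.

Lemma ent_scal c a : ent a -> ent (PS_scal c a).
Proof.
  intros H. apply (ent_dom _ (PS_scal (Rabs c + 1) a)).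
  - intro n. unfold PS_scal, scal; simpl; unfold mult; simpl. rewrite !Rabs_mult.
    apply Rmult_le_compat_r; [apply Rabs_pos|]. rewrite (Rabs_pos_eq (Rabs c + 1)).
    + lra.
    + pose proof (Rabs_pos c); lra.
  - unfold ent. rewrite CV_radius_scal; auto. pose proof (Rabs_pos c); lra.
Qed.

Lemma ent_plus a b : ent a -> ent b -> ent (PS_plus a b).
Proof.
  unfold ent; intros Ha Hb. pose proof (CV_radius_plus a b) as H.
  rewrite Ha, Hb in H. simpl in H. destruct (CV_radius (PS_plus a b)); simpl in H; tauto.
Qed.

Lemma ent_incr a : ent a -> ent (PS_incr_1 a).
Proof. unfold ent; intros; rewrite CV_radius_incr_1; auto. Qed.

Lemma ent_derive a : ent a -> ent (PS_derive a).
Proof. unfold ent; intros; rewrite CV_radius_derive; auto. Qed.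

Lemma E_der a x : ent a -> derivable_pt_lim (E a) x (2 * x * E (PS_derive a) x).
Proof.
  intros H.
  replace (2 * x * E (PS_derive a) x) with (PSeries (PS_derive a) (x ^ 2) * (INR 2 * x ^ Nat.pred 2)).
  2:{ unfold E. simpl. ring. }
  apply (derivable_pt_lim_comp (fun x => x ^ 2) (PSeries a)).
  - apply derivable_pt_lim_pow.
  - apply is_derive_Reals. apply is_derive_PSeries. rewrite H. simpl; auto.
Qed.

Lemma D_E a : ent a -> D (E a) = fun x => 2 * x * E (PS_derive a) x.
Proof. intros H. apply functional_extensionality; intro x. apply D_unique, E_der; auto. Qed.

Lemma E_incr a x : E (PS_incr_1 a) x = x ^ 2 * E a x.
Proof. unfold E. apply PSeries_incr_1. Qed.

Lemma E_scal c a x : E (PS_scal c a) x = c * E a x.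
Proof. unfold E. apply PSeries_scal. Qed.

Lemma E_plus a b x : ent a -> ent b -> E (PS_plus a b) x = E a x + E b x.
Proof. intros. unfold E. apply PSeries_plus; apply ent_ex; auto. Qed.

Lemma E_zero a x : (forall j, a j = 0) -> E a x = 0.
Proof.
  intros H. unfold E. rewrite (PSeries_ext a (PS_scal 0 a)).
  - rewrite PSeries_scal. ring.
  - intro n. rewrite H. unfold PS_scal, scal; simpl; unfold mult; simpl. ring.
Qed.

Definition cf (n : nat) (a : nat -> R) (i : nat) : R :=
  2 ^ n * INR (fact (i + n)) / INR (fact i) * a (i + n)%nat.

Lemma factS n : INR (fact (S n)) = (INR n + 1) * INR (fact n).
Proof. rewrite fact_simpl, mult_INR, S_INR. ring. Qed.

Lemma cf_S n a : forall i, cf (S n) a i = PS_scal 2 (PS_derive (cf n a)) i.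
Proof.
  intro i. unfold cf, PS_scal, PS_derive.
  change (scal (V := R_NormedModule) 2 ?y) with (2 * y).
  replace (i + S n)%nat with (S i + n)%nat by lia.
  rewrite (factS i). rewrite S_INR. simpl pow.
  assert (H1 := INR_fact_neq_0 i). assert (H2 : INR i + 1 <> 0) by (pose proof (pos_INR i); lra).
  field. auto.
Qed.

Lemma ent_cf n a : ent a -> ent (cf n a).
Proof.
  intros H. induction n.
  - unfold ent. rewrite (CV_radius_ext _ a); auto. intro i. unfold cf.
    rewrite Nat.add_0_r. simpl. field. apply INR_fact_neq_0.
  - unfold ent. rewrite (CV_radius_ext _ _ (cf_S n a)). apply ent_scal, ent_derive; auto.
Qed.

Lemma iter_xinvD n a : ent a -> eqp (iterop n xinvD (E a)) (E (cf n a)).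
Proof.
  intros Ha. induction n.
  - intros x Hx. simpl. unfold E. apply PSeries_ext. intro i. unfold cf.
    rewrite Nat.add_0_r. simpl. field. apply INR_fact_neq_0.
  - change (iterop (S n) xinvD (E a)) with (xinvD (iterop n xinvD (E a))).
    eapply eqp_trans; [apply xinvD_eqp; exact IHn|].
    intros x Hx. unfold xinvD. rewrite D_E by (apply ent_cf; auto).
    unfold E. rewrite (PSeries_ext _ _ _ (cf_S n a)). rewrite PSeries_scal.
    field. lra.
Qed.

Fixpoint incrn (n : nat) (a : nat -> R) : nat -> R :=
  match n with O => a | S n => PS_incr_1 (incrn n a) end.

Lemma incrn_at n a i : incrn n a (i + n)%nat = a i.
Proof.
  induction n; simpl.
  - rewrite Nat.add_0_r; auto.
  - replace (i + S n)%nat with (S (i + n)) by lia. simpl. auto.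
Qed.

Lemma ent_incrn n a : ent a -> ent (incrn n a).
Proof. intros; induction n; simpl; auto. apply ent_incr; auto. Qed.

Lemma E_incrn n a x : E (incrn n a) x = (x ^ 2) ^ n * E a x.
Proof.
  induction n; [simpl; ring|].
  change (incrn (S n) a) with (PS_incr_1 (incrn n a)). rewrite E_incr, IHn. simpl pow. ring.
Qed.

Definition bc (g lam : R) (k : nat) : R :=
  (-1) ^ k * (lam / 2) ^ (2 * k) / (INR (fact k) * poch (g + 1) k).

Lemma poch_fact a k : poch (INR a + 1) k * INR (fact a) = INR (fact (k + a)).
Proof.
  induction k; simpl poch.
  - simpl. ring.
  - replace (S k + a)%nat with (S (k + a)) by lia. rewrite factS, <- IHk, plus_INR. ring.
Qed.

Lemma poch_ge1 g k : 0 <= g -> 1 <= poch (g + 1) k.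
Proof.
  intros Hg. induction k; simpl; [lra|].
  pose proof (pos_INR k). apply Rle_trans with (1 * 1); [lra|].
  apply Rmult_le_compat; lra.
Qed.

Lemma ent_bc g lam : 0 <= g -> ent (bc g lam).
Proof.
  intros Hg. set (q := (lam/2)^2). assert (Hq : 0 <= q) by apply pow2_ge_0.
  apply (ent_dom _ (fun n => (q + 1) ^ n / INR (fact n))).
  - intro n. assert (HF' : 0 < INR (fact n)) by (apply INR_fact_lt_0).
    pose proof (poch_ge1 g n Hg) as HP.
    assert (Eq : bc g lam n = (-1) ^ n * (q ^ n * / INR (fact n) * / poch (g + 1) n)).
    { unfold bc, q. rewrite pow_mult. field. split; apply Rgt_not_eq; lra. }
    rewrite Eq, Rabs_mult, pow_1_abs, Rmult_1_l.
    assert (A : q ^ n <= (q + 1) ^ n) by (apply pow_incr; lra).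
    assert (B : 0 < / poch (g + 1) n <= 1).
    { split; [apply Rinv_0_lt_compat; lra|]. apply Rle_trans with (/ 1); [apply Rinv_le_contravar; lra|rewrite Rinv_1; lra]. }
    assert (C : 0 < / INR (fact n)) by (apply Rinv_0_lt_compat; lra).
    assert (D0 : 0 <= q ^ n) by (apply pow_le; lra).
    rewrite Rabs_pos_eq.
    2:{ apply Rmult_le_pos; [apply Rmult_le_pos|]; lra. }
    rewrite Rabs_pos_eq.
    2:{ unfold Rdiv. apply Rmult_le_pos; [apply pow_le|]; lra. }
    unfold Rdiv.
    apply Rle_trans with (q ^ n * / INR (fact n) * 1).
    + apply Rmult_le_compat_l; [apply Rmult_le_pos|]; lra.
    + rewrite Rmult_1_r. apply Rmult_le_compat_r; lra.
  - apply ent_exp. lra.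
Qed.

Lemma Jn_E g lam x : 0 <= g -> Jn g lam x = E (bc g lam) x.
Proof.
  intros Hg. unfold Jn, Rlim.
  set (u := fun N => sum_f_R0 _ N).
  assert (Hu : Un_cv u (E (bc g lam) x)).
  { apply is_lim_seq_Reals.
    assert (Hs : ex_series (fun k => bc g lam k * (x^2) ^ k)).
    { eapply ex_series_ext; [|apply (ent_ex _ (x^2) (ent_bc g lam Hg))].
      intro n. simpl. rewrite pow_n_pow. unfold scal; simpl; unfold mult; simpl. ring. }
    pose proof (Series_correct _ Hs) as Hc. unfold is_series in Hc.
    unfold E, PSeries. eapply is_lim_seq_ext; [|exact Hc].
    intro n. rewrite sum_n_Reals. unfold u. apply sum_eq. intros k _.
    unfold bc. rewrite <- pow_mult. replace (lam * x / 2) with (lam / 2 * x) by (field).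
    rewrite Rpow_mult_distr. rewrite pow_mult. unfold Rdiv. ring. }
  pose proof (epsilon_spec (inhabits 0) (fun l => Un_cv u l) (ex_intro _ _ Hu)) as H1.
  exact (UL_sequence u _ _ H1 Hu).
Qed.

Lemma poch_pos g k : 0 <= g -> 0 < poch (g + 1) k.
Proof. intros H. pose proof (poch_ge1 g k H). lra. Qed.

Lemma bc_closed a lam n : bc (INR a) lam n =
  (-1) ^ n * ((lam / 2) ^ 2) ^ n * INR (fact a) / (INR (fact n) * INR (fact (n + a))).
Proof.
  unfold bc. rewrite <- poch_fact, pow_mult.
  pose proof (poch_pos (INR a) n (pos_INR a)). pose proof (INR_fact_neq_0 n). pose proof (INR_fact_neq_0 a).
  field. repeat split; auto; lra.
Qed.

Lemma m1_sq a : (-1) ^ a = 1 \/ (-1) ^ a = -1.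
Proof.
  destruct (Nat.Even_or_Odd a) as [[k Hk]|[k Hk]]; subst.
  - left. apply pow_1_even.
  - right. replace (2 * k + 1)%nat with (S (2 * k)) by lia. rewrite pow_1_odd. auto.
Qed.

Lemma lam_pow lam a : lam ^ (2 * a) = 4 ^ a * ((lam / 2) ^ 2) ^ a.
Proof. rewrite pow_mult, <- Rpow_mult_distr. f_equal. field. Qed.

Lemma two_pow a : 2 ^ (2 * a) = 4 ^ a.
Proof. rewrite pow_mult. f_equal. ring. Qed.

Lemma fact_pos n : 0 < INR (fact n).
Proof. apply INR_fact_lt_0. Qed.

Ltac factS_tac :=
  repeat match goal with
  | |- context [INR (fact (S ?n))] => rewrite (factS n)
  end.

Lemma core_c al lam i :
  (-1) ^ (al + 1) * (2 ^ (2 * al + 4) * INR (fact (i + (2 * al + 4))) / INR (fact i)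
     * bc (INR (al + 2)) lam (i + al + 2)) + lam ^ (2 * al + 4) * bc (INR (al + 2)) lam i = 0.
Proof.
  rewrite !bc_closed.
  replace (i + al + 2)%nat with (i + (al + 2))%nat by lia.
  replace (i + (al + 2) + (al + 2))%nat with (i + (2 * al + 4))%nat by lia.
  replace (2 * al + 4)%nat with (2 * (al + 2))%nat by lia.
  rewrite two_pow, lam_pow.
  set (q := (lam / 2) ^ 2).
  rewrite !pow_add.
  pose proof (INR_fact_neq_0 i). pose proof (INR_fact_neq_0 (i + (al + 2))).
  pose proof (INR_fact_neq_0 (i + 2 * (al + 2))).
  destruct (m1_sq al) as [Hs|Hs]; rewrite Hs; field; auto.
Qed.

Lemma incrn_at2 n a i k : k = (i + n)%nat -> incrn n a k = a i.
Proof. intros ->. apply incrn_at. Qed.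

Definition kq (al : nat) (lam : R) : nat -> R :=
  PS_incr_1 (PS_scal (- kcoef al lam) (bc (INR (al + 2)) lam)).

Lemma ent_kq al lam : ent (kq al lam).
Proof. apply ent_incr, ent_scal, ent_bc, pos_INR. Qed.

Lemma Kfun_E al lam : Kfun al lam = E (kq al lam).
Proof.
  apply functional_extensionality; intro x. unfold Kfun, kq.
  replace (INR al + 2) with (INR (al + 2)) by (rewrite plus_INR; simpl; ring).
  rewrite Jn_E by apply pos_INR. rewrite E_incr, E_scal. ring.
Qed.

Lemma pow_incrn_E n a : (fun t => t ^ (2 * n) * E a t) = E (incrn n a).
Proof.
  apply functional_extensionality; intro t. rewrite E_incrn, pow_mult. reflexivity.
Qed.

Lemma L2a4_E al a x : 0 < x -> ent a ->
  L2a4 al (E a) x = E (PS_scal ((-1) ^ (al + 1)) (PS_incr_1 (cf (2 * al + 4) (incrn (al + 1) a)))) x.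
Proof.
  intros Hx Ha. unfold L2a4.
  replace (2 * al + 2)%nat with (2 * (al + 1))%nat by lia.
  rewrite pow_incrn_E. rewrite (iter_xinvD _ _ (ent_incrn _ _ Ha) x Hx).
  rewrite E_scal, E_incr. ring.
Qed.

Lemma part_c al lam : 0 <= lam -> forall x, 0 < x ->
     L2a4 al (Kfun al lam) x + lam ^ (2 * al + 4) * Kfun al lam x = 0.
Proof.
  intros _ x Hx. rewrite Kfun_E. rewrite L2a4_E by (auto; apply ent_kq).
  rewrite <- E_scal, <- E_plus.
  2:{ apply ent_scal, ent_incr, ent_cf, ent_incrn, ent_kq. }
  2:{ apply ent_scal, ent_kq. }
  apply E_zero. intro j. unfold PS_plus, PS_scal.
  change (@plus R_NormedModule ?u ?v) with (u + v).
  change (@scal R_AbsRing R_NormedModule ?u ?v) with (u * v).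
  destruct j as [|i].
  - simpl. unfold kq; simpl. change (@zero R_NormedModule) with 0. ring.
  - change (PS_incr_1 (cf (2 * al + 4) (incrn (al + 1) (kq al lam))) (S i)) with
      (cf (2 * al + 4) (incrn (al + 1) (kq al lam)) i).
    unfold cf. replace (i + (2 * al + 4))%nat with ((i + al + 3) + (al + 1))%nat at 2 by lia.
    rewrite incrn_at. unfold kq.
    replace (i + al + 3)%nat with (S (i + al + 2)) by lia.
    change (PS_incr_1 ?c (S ?n)) with (c n).
    unfold PS_scal. change (@scal R_AbsRing R_NormedModule ?u ?v) with (u * v).
    pose proof (core_c al lam i) as Hc.
    transitivity (- kcoef al lam * 0); [|ring]. rewrite <- Hc. ring.
Qed.

Lemma L2_E al m x : 0 < x -> ent m ->
  L2 al (E m) x = E (PS_plus (PS_scal (4 * INR al + 4) (PS_derive m))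
                             (PS_scal 4 (PS_incr_1 (PS_derive (PS_derive m))))) x.
Proof.
  intros Hx Hm. unfold L2. rewrite D_E by auto.
  erewrite D_unique.
  2:{ apply dl_mult; [apply derivable_pt_lim_pow|].
      apply dl_mult; [apply dl_mult; [apply dl_const|apply dl_id]|].
      apply E_der, ent_derive; auto. }
  cbv beta.
  rewrite E_plus.
  2:{ apply ent_scal, ent_derive; auto. }
  2:{ apply ent_scal, ent_incr, ent_derive, ent_derive; auto. }
  rewrite !E_scal, E_incr.
  replace (Nat.pred (2 * al + 1)) with (2 * al)%nat by lia.
  rewrite pow_add, plus_INR, mult_INR. simpl INR.
  assert (H1 : x ^ (2 * al) <> 0) by (apply pow_nonzero; lra).
  field. split; auto; lra.
Qed.

Definition mJ (al : nat) (M lam : R) : nat -> R :=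
  PS_plus (bc (INR al) lam) (PS_scal M (kq al lam)).

Lemma ent_mJ al M lam : ent (mJ al M lam).
Proof. apply ent_plus; [apply ent_bc, pos_INR|apply ent_scal, ent_kq]. Qed.

Lemma JM_E al M lam : JM al M lam = E (mJ al M lam).
Proof.
  apply functional_extensionality; intro x. unfold JM, mJ.
  rewrite Jn_E by apply pos_INR. rewrite Kfun_E.
  rewrite E_plus; [|apply ent_bc, pos_INR|apply ent_scal, ent_kq]. rewrite E_scal. auto.
Qed.

Ltac ent_tac := repeat match goal with
  | |- ent (PS_plus _ _) => apply ent_plus
  | |- ent (PS_scal _ _) => apply ent_scal
  | |- ent (PS_incr_1 _) => apply ent_incr
  | |- ent (PS_derive _) => apply ent_derive
  | |- ent (cf _ _) => apply ent_cf
  | |- ent (incrn _ _) => apply ent_incrn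
  | |- ent (mJ _ _ _) => apply ent_mJ
  | |- ent (kq _ _) => apply ent_kq
  end.

Lemma part_b al M lam : 0 <= lam -> forall x, 0 < x ->
     (L2 al (JM al M lam) x + lam ^ 2 * JM al M lam x)
     + M / (2 ^ (2 * al + 2) * INR (fact (al + 2))) *
       (L2a4 al (JM al M lam) x + lam ^ (2 * al + 4) * JM al M lam x)
     = 0.
Proof.
  intros _ x Hx. rewrite JM_E.
  rewrite L2_E, L2a4_E by (auto; apply ent_mJ).
  set (m := mJ al M lam).
  set (cc := M / (2 ^ (2 * al + 2) * INR (fact (al + 2)))).
  rewrite <- !E_scal, <- !E_plus by (unfold m; ent_tac).
  rewrite <- E_scal, <- E_plus by (unfold m; ent_tac).
  apply E_zero. intro j. unfold PS_plus, PS_scal.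
  repeat change (@plus _ ?u ?v) with (u + v).
  repeat change (@scal _ _ ?u ?v) with (u * v).
  destruct j as [|i].
  - unfold PS_derive. simpl PS_incr_1. change (@zero _) with 0.
    unfold m, mJ, PS_plus, PS_scal, kq. simpl PS_incr_1.
    repeat change (@plus _ ?u ?v) with (u + v).
    repeat change (@scal _ _ ?u ?v) with (u * v).
    repeat change (@zero _) with 0.
    unfold PS_scal. repeat change (@scal _ _ ?u ?v) with (u * v).
    rewrite !bc_closed. unfold cc, kcoef.
    rewrite !Nat.add_0_l. replace (1 + al)%nat with (S al) by lia.
    replace (al + 2)%nat with (S (S al)) by lia.
    replace (2 * al + 4)%nat with (2 * (S (S al)))%nat by lia.
    replace (2 * al + 2)%nat with (2 * (S al))%nat by lia.
    rewrite (pow_mult (lam / 2)), !two_pow, !(lam_pow lam).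
    replace (lam ^ 2) with (4 * (lam / 2) ^ 2) by field.
    set (q := (lam / 2) ^ 2).
    rewrite !factS. simpl pow. simpl fact. rewrite !S_INR.
    pose proof (INR_fact_neq_0 al). pose proof (pos_INR al). 
    assert (4 ^ al <> 0) by (apply pow_nonzero; lra).
    change (INR 0) with 0. field. repeat split; auto; lra.
  - repeat change (PS_incr_1 ?c (S ?n)) with (c n).
    unfold PS_derive, cf.
    rewrite (incrn_at2 (al + 1) m (S (i + al + 2)) (i + (2 * al + 4))) by lia.
    unfold m, mJ, PS_plus, PS_scal, kq.
    repeat change (@plus _ ?u ?v) with (u + v).
    repeat change (@scal _ _ ?u ?v) with (u * v).
    repeat change (PS_incr_1 ?c (S ?n)) with (c n).
    repeat change (@scal _ _ ?u ?v) with (u * v).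
    unfold PS_scal. repeat change (@scal _ _ ?u ?v) with (u * v).
    rewrite !bc_closed. unfold cc, kcoef.
    replace (S (S i) + al)%nat with (S (i + al + 1)) by lia.
    replace (S i + al)%nat with (i + al + 1)%nat by lia.
    replace (S i + (al + 2))%nat with (S (S (i + al + 1))) by lia.
    replace (i + (al + 2))%nat with (S (i + al + 1)) by lia.
    replace (i + (2 * al + 4))%nat with (S (i + 2 * al + 3)) by lia.
    replace (i + al + 2)%nat with (S (i + al + 1)) by lia.
    replace (S (S (i + al + 1)) + al)%nat with (i + 2 * al + 3)%nat by lia.
    replace (S (i + al + 1) + (al + 2))%nat with (S (i + 2 * al + 3)) by lia.
    replace (2 * al + 4)%nat with (2 * (S (S al)))%nat by lia.
    replace (2 * al + 2)%nat with (2 * (S al))%nat by lia.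
    replace (al + 2)%nat with (S (S al)) by lia.
    rewrite (pow_mult (lam / 2)), !two_pow, !(lam_pow lam).
    replace (lam ^ 2) with (4 * (lam / 2) ^ 2) by field.
    set (q := (lam / 2) ^ 2).
    rewrite !factS. rewrite !S_INR, !plus_INR, !mult_INR.
    repeat rewrite <- tech_pow_Rmult.
    rewrite !pow_add.
    pose proof (INR_fact_neq_0 al). pose proof (pos_INR al). pose proof (pos_INR i).
    pose proof (INR_fact_neq_0 i). pose proof (INR_fact_neq_0 (i + al + 1)). pose proof (INR_fact_neq_0 (i + 2 * al + 3)).
    assert (4 ^ al <> 0) by (apply pow_nonzero; lra).
    change (INR 1) with 1 in *. change (INR 2) with (1 + 1) in *. change (INR 3) with (1 + 1 + 1) in *.
    destruct (m1_sq al) as [Hs|Hs]; rewrite Hs; field; repeat split; auto; lra.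
Qed.

Require Import Defs.
From Stdlib Require Import Reals Factorial.
Open Scope R_scope.

Theorem theorem5p1 (alpha : nat) (M : R) (HM : 0 <= M) :
  (* (a) *)
  (forall (y : R -> R), Cn_pos (2 * alpha + 4) y ->
     forall x, 0 < x ->
       x ^ 2 * iterop (2 * alpha + 4) xinvD (fun t => t ^ (2 * alpha + 2) * y t) x
       = iterop (alpha + 2) (Bop alpha) y x) /\
  (* (b) *)
  (forall lambda, 0 <= lambda -> forall x, 0 < x ->
     (L2 alpha (JM alpha M lambda) x + lambda ^ 2 * JM alpha M lambda x)
     + M / (2 ^ (2 * alpha + 2) * INR (fact (alpha + 2))) *
       (L2a4 alpha (JM alpha M lambda) x + lambda ^ (2 * alpha + 4) * JM alpha M lambda x)
     = 0) /\
  (* (c) *)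
  (forall lambda, 0 <= lambda -> forall x, 0 < x ->
     L2a4 alpha (Kfun alpha lambda) x + lambda ^ (2 * alpha + 4) * Kfun alpha lambda x = 0).
Proof.
  split; [exact (part_a alpha)|split; [exact (part_b alpha M)|exact (part_c alpha)]].
Qed.
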